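(* Let $f\colon\mathbb{R}^n\to\overline{\mathbb{R}}$ be a lower semicontinuous function and $M\subset\mathbb{R}^n$ a closed set on which $f$ is finite. Fix a point $\bar x\in M$ and a vector $\bar v\in\hat\partial f(\bar x)$ (so that $(\bar x,f(\bar x),\bar v)\in[\hat\partial f]\big|_M$). Suppose there is a sequence of real numbers $m_i\to\infty$ such that for each $i$, $$\bar v\in\operatorname{bd}\bigcup_{x\in M}\partial\Big(f(\cdot)+\tfrac12 m_i|\cdot-\bar x|^2\Big)(x).$$ Then $(\bar x,f(\bar x),\bar v)\in\operatorname{cl}\,[\hat\partial f]\big|_{M^c}$; that is, there exist sequences $x_i\notin M$ and $v_i\in\hat\partial f(x_i)$ such that $(x_i,f(x_i),v_i)\to(\bar x,f(\bar x),\bar v)$.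
   Context: $\overline{\mathbb{R}}=\mathbb{R}\cup\{\pm\infty\}$. For $\bar x$ with $f(\bar x)$ finite, the Fréchet subdifferential $\hat\partial f(\bar x)$ is the set of $v\in\mathbb{R}^n$ with $f(x)\ge f(\bar x)+\langle v,x-\bar x\rangle+o(|x-\bar x|)$; the limiting subdifferential $\partial g(\bar x)$ of a function $g$ is the set of $v$ for which there exist $x_i$, $v_i\in\hat\partial g(x_i)$ with $(x_i,g(x_i),v_i)\to(\bar x,g(\bar x),v)$; both are empty where the function is not finite. The Fréchet subjet is $[\hat\partial f]=\{(x,y,v): y=f(x),\ v\in\hat\partial f(x)\}$, and for $S\subset\mathbb{R}^n$, $[\hat\partial f]\big|_S=[\hat\partial f]\cap(S\times\mathbb{R}\times\mathbb{R}^n)$. $\operatorname{bd}$ and $\operatorname{cl}$ denote boundary and closure, $M^c$ the complement of $M$, and $|\cdot|$ the Euclidean norm. *)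

(* Defs.v *)
From HB Require Import structures.
From mathcomp Require Import all_boot all_order all_algebra.
From mathcomp Require Import all_classical all_reals all_analysis.
Set Implicit Arguments. Unset Strict Implicit. Unset Printing Implicit Defensive.
Import Order.TTheory GRing.Theory Num.Theory.
Import numFieldNormedType.Exports.
Local Open Scope classical_set_scope.
Local Open Scope ring_scope.

Section Defs.
Variables (R : realType) (n : nat).
Notation V := 'rV[R]_n.

Definition dotv (u v : V) : R := \sum_(i < n) u 0 i * v 0 i.
Definition enorm (u : V) : R := Num.sqrt (dotv u u).

Definition frechet_subdiff (f : V -> \bar R) (xb : V) : set V :=
  [set v | f xb \is a fin_num /\
     forall eps : R, 0 < eps -> exists2 delta : R, 0 < delta &
       forall x : V, enorm (x - xb) < delta ->
         ((f xb + (dotv v (x - xb))%:E - (eps * enorm (x - xb))%:E) <= f x)%E].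

Definition limiting_subdiff (g : V -> \bar R) (xb : V) : set V :=
  [set v | g xb \is a fin_num /\
     exists (x : nat -> V) (w : nat -> V),
       (forall i, frechet_subdiff g (x i) (w i)) /\
       x @ \oo --> xb /\
       (fun i => fine (g (x i))) @ \oo --> fine (g xb) /\
       w @ \oo --> v].

Definition prox_shift (f : V -> \bar R) (m : R) (xb : V) : V -> \bar R :=
  fun y => (f y + (2^-1 * m * enorm (y - xb) ^+ 2)%:E)%E.

Definition bd (A : set V) : set V := closure A `\` interior A.

End Defs.

(* Main.v *)
Require Import Defs.
From HB Require Import structures.
From mathcomp Require Import all_boot all_order all_algebra.
From mathcomp Require Import all_classical all_reals all_analysis.
From mathcomp Require Import ring lra.
Import Order.TTheory GRing.Theory Num.Theory.
Import numFieldNormedType.Exports.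
Local Open Scope classical_set_scope.
Local Open Scope ring_scope.


Module Aux.
Set Implicit Arguments. Unset Strict Implicit.


Section H.
Variables (R : realType) (n : nat).
Notation V := 'rV[R]_n.
Implicit Types u a b c : V.

Lemma dotvDl a b c : dotv (a + b) c = dotv a c + dotv b c.
Proof. by rewrite /dotv -big_split; apply: eq_bigr => i _; rewrite mxE mulrDl. Qed.
Lemma dotvC a b : dotv a b = dotv b a.
Proof. by apply: eq_bigr => i _; rewrite mulrC. Qed.
Lemma dotvDr a b c : dotv a (b + c) = dotv a b + dotv a c.
Proof. by rewrite dotvC dotvDl !(dotvC a). Qed.
Lemma dotvZl (k : R) a b : dotv (k *: a) b = k * dotv a b.
Proof. by rewrite /dotv mulr_sumr; apply: eq_bigr => i _; rewrite mxE mulrA. Qed.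
Lemma dotvNl a b : dotv (- a) b = - dotv a b.
Proof. by rewrite /dotv -sumrN; apply: eq_bigr => i _; rewrite mxE mulNr. Qed.
Lemma dotvNr a b : dotv a (- b) = - dotv a b.
Proof. by rewrite dotvC dotvNl dotvC. Qed.
Lemma dotvBl a b c : dotv (a - b) c = dotv a c - dotv b c.
Proof. by rewrite dotvDl dotvNl. Qed.
Lemma dotvBr a b c : dotv a (b - c) = dotv a b - dotv a c.
Proof. by rewrite dotvDr dotvNr. Qed.
Lemma dotv_ge0 a : 0 <= dotv a a.
Proof. by apply: sumr_ge0 => i _; rewrite -expr2 sqr_ge0. Qed.
Lemma enorm_sqr a : enorm a ^+ 2 = dotv a a.
Proof. by rewrite /enorm sqr_sqrtr // dotv_ge0. Qed.
Lemma enorm_ge0 a : 0 <= enorm a.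
Proof. exact: sqrtr_ge0. Qed.

Lemma coord_le a (i : 'I_n) : `|a 0 i| <= `|a|.
Proof.
have /mapP[j Hj ->] : `|a 0 i| \in [seq `|a x.1 x.2| | x : 'I_1 * 'I_n].
  by apply/mapP; exists (0, i) => //=; rewrite mem_enum.
rewrite [leRHS](_ : _ = mx_norm a) // mx_normrE; apply/bigmax_geP; right => /=; by exists j.
Qed.

Lemma dotv_le a b : `|dotv a b| <= n%:R * `|a| * `|b|.
Proof.
rewrite /dotv; apply: le_trans (ler_norm_sum _ _ _) _.
apply: le_trans (_ : \sum_(i < n) `|a| * `|b| <= _).
  by apply: ler_sum => i _; rewrite normrM ler_pM // coord_le.
by rewrite sumr_const card_ord -mulrA mulr_natl.
Qed.

Lemma coord_le_enorm a (j : 'I_n) : `|a 0 j| <= enorm a.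
Proof.
rewrite -sqrtr_sqr /enorm ler_wsqrtr // /dotv (bigD1 j) //= expr2 lerDl.
by apply: sumr_ge0 => i _; rewrite -expr2 sqr_ge0.
Qed.

Lemma norm_le_enorm a : `|a| <= enorm a.
Proof.
rewrite [leLHS](_ : _ = mx_norm a) // mx_normrE.
apply: bigmax_le => [|[i j] _]; first exact: enorm_ge0.
by rewrite /= (ord1 i); exact: coord_le_enorm.
Qed.

Lemma enorm_le_norm a : enorm a <= (n%:R + 1) * `|a|.
Proof.
have h0 : 0 <= (n%:R + 1) * `|a| by rewrite mulr_ge0 // addr_ge0.
rewrite -(ger0_norm h0) -sqrtr_sqr /enorm ler_wsqrtr //.
apply: le_trans (ler_norm _) _; apply: le_trans (dotv_le _ _) _.
rewrite exprMn expr2 -mulrA ler_wpM2r ?mulr_ge0 //.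
have : 0 <= n%:R :> R by [].
nra.
Qed.

End H.

End Aux.
Import Aux.


Lemma seq_min (R : realType) (s : seq R) a : a \in s ->
  exists2 b, b \in s & forall c, c \in s -> b <= c.
Proof.
elim: s a => // x s IH a; rewrite inE => /orP [_|].
  case: (pselect (exists b, b \in s)) => [[b /IH [c cs cmin]]|ns].
    case: (leP x c) => xc.
      exists x; first by rewrite inE eqxx.
      move=> d; rewrite inE => /orP [/eqP ->//| /cmin]; exact: le_trans.
    exists c; first by rewrite inE cs orbT.
    move=> d; rewrite inE => /orP [/eqP ->| /cmin //]; exact: ltW.
  exists x; first by rewrite inE eqxx.
  by move=> d; rewrite inE => /orP [/eqP ->//| ds]; exfalso; apply: ns; exists d.
move=> /IH [c cs cmin].
case: (leP x c) => xc.
  exists x; first by rewrite inE eqxx.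
  move=> d; rewrite inE => /orP [/eqP ->//| /cmin]; exact: le_trans.
exists c; first by rewrite inE cs orbT.
move=> d; rewrite inE => /orP [/eqP ->| /cmin //]; exact: ltW.
Qed.

Lemma lsc_min (R : realType) (n : nat) (g : 'rV[R]_n -> \bar R)
    (B : set 'rV[R]_n) (x0 : 'rV[R]_n) :
  compact B -> B x0 -> lower_semicontinuous g ->
  (forall y, B y -> (-oo < g y)%E) ->
  exists2 x, B x & forall y, B y -> (g x <= g y)%E.
Proof.
move=> cB Bx0 lg gfin; apply: contrapT => H.
have H' : forall x, B x -> exists y, B y /\ (g y < g x)%E.
  move=> x Bx; apply: contrapT => nx; apply: H; exists x => // y By.
  rewrite leNgt; apply/negP => lt; apply: nx; by exists y.
rewrite compact_cover in cB.
have := cB R [set a : R | exists2 x, B x & (g x <= a%:E)%E]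
  (fun a => [set y | (a%:E < g y)%E]).
case.
- by move=> a _; move/lower_semicontinuousP : lg; apply.
- move=> y By; have [x [Bx gxy]] := H' y By.
  have gxf : g x \is a fin_num.
    by rewrite fin_numE gt_eqF ?gxfin ?gfin //= lt_eqF // (lt_le_trans gxy) // leey.
  exists (fine (g x)); first by exists x => //; rewrite fineK.
  by rewrite /= fineK.
move=> D' sD cov.
have [a Da _] := cov x0 Bx0.
have [b Db bmin] := @seq_min R (finmap.enum_fset D') a Da.
have := sD b Db; rewrite inE => -[x Bx gxb].
have [c Dc /= cx] := cov x Bx.
have := bmin c Dc; rewrite -lee_fin => bc.
have := lt_le_trans cx (le_trans gxb bc).
by rewrite ltxx.
Qed.



Lemma h_cont (R : realType) (n : nat) (c : R) (w p : 'rV[R]_n) :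
  continuous (fun y : 'rV[R]_n => c * dotv (y - p) (y - p) - dotv w (y - p)).
Proof.
move=> x; apply/(@cvgrPdist_lt _ _ _ (nbhs x) (nbhs_filter x)) => e e0.
set K : R := n%:R.
set C := `|c| * K + 2 * `|c| * K * `|x - p| + K * `|w|.
have C0 : 0 <= C.
  by rewrite /C !addr_ge0 ?mulr_ge0 ?normr_ge0 ?ler0n.
set d := Num.min 1 (e / (C + 1)).
have d0 : 0 < d by rewrite lt_min ltr01 divr_gt0 // ltr_wpDl.
apply/nbhs_ballP; exists d => // y; rewrite -ball_normE /= => xy.
have hd1 : `|x - y| < 1 by apply: lt_le_trans xy _; rewrite ge_min lexx.
have hde : `|x - y| < e / (C + 1) by apply: lt_le_trans xy _; rewrite ge_min lexx orbT.
set u := y - x; set q := x - p.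
have yp : y - p = u + q by rewrite /u /q addrA addrNK.
have Nu : `|u| = `|x - y| by rewrite /u distrC.
have Nq : `|x - p| = `|q| by [].
rewrite yp; clearbody u q.
have -> : c * dotv q q - dotv w q - (c * dotv (u + q) (u + q) - dotv w (u + q))
   = - (c * (dotv u u + 2 * dotv q u) - dotv w u).
  rewrite !dotvDl !dotvDr (dotvC q u); ring.
rewrite normrN.
have h1 := dotv_le u u; have h2 := dotv_le q u; have h3 := dotv_le w u.
rewrite -/K Nu in h1 h2 h3.
have K0 : 0 <= K by rewrite ler0n.
set a := `|x - y| in hd1 hde h1 h2 h3 *.
have a0 : 0 <= a by rewrite normr_ge0.
have : `|c * (dotv u u + 2 * dotv q u) - dotv w u| <= C * a.
  apply: le_trans (ler_normB _ _) _.
  rewrite normrM.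
  have : `|dotv u u + 2 * dotv q u| <= K * a + 2 * K * `|q| * a.
    apply: le_trans (ler_normD _ _) _; rewrite normrM ger0_norm //.
    have ha1 : a * a <= a by nra.
    apply: lerD.
      apply: le_trans h1 _; rewrite -mulrA ler_wpM2l //.
    by rewrite -!mulrA ler_wpM2l // mulrA.
  move=> hb.
  have hc : `|c| * `|dotv u u + 2 * dotv q u| <= `|c| * (K * a + 2 * K * `|q| * a).
    by rewrite ler_wpM2l.
  rewrite /C Nq.
  have nq := normr_ge0 q; have nc := normr_ge0 c; have nw := normr_ge0 w.
  nra.
move=> hC; apply: le_lt_trans hC _.
have C1 : 0 < C + 1 by rewrite ltr_wpDl.
rewrite ltr_pdivlMr // in hde.
nra.
Qed.

Lemma lsc_add (R : realType) (n : nat) (f : 'rV[R]_n -> \bar R) (h : 'rV[R]_n -> R) :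
  lower_semicontinuous f -> continuous h ->
  lower_semicontinuous (fun y => (f y + (h y)%:E)%E).
Proof.
move=> lf ch x a ax.
have [dl [dl0 hdl]] : exists dl : R, 0 < dl /\ ((a - h x + dl)%:E < f x)%E.
  move: ax; case: (f x) => [r||] //=.
    rewrite -EFinD lte_fin => ax; exists ((r + h x - a) / 2); split.
      by rewrite divr_gt0 // subr_gt0.
    by rewrite lte_fin; lra.
  by move=> _; exists 1; split; rewrite ?ltr01 ?ltry.
have [V1 nV1 hV1] := lf x _ hdl.
have : \forall y \near x, `|h x - h y| < dl by move/cvgrPdist_lt : (ch x); apply.
move=> nV2.
exists (V1 `&` [set y | `|h x - h y| < dl]); first exact: filterI.
move=> y [/hV1 fy /= hy].
move: fy; case: (f y) => [r||] //=.
  rewrite -EFinD !lte_fin => fy.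
  have := ler_norm (h x - h y); lra.
by move=> _; rewrite addye // ltry.
Qed.



Lemma cvg_inv (R : realType) (V : normedModType R) (a : nat -> V) y :
  (forall k, `|y - a k| <= k.+1%:R^-1) -> a @ \oo --> y.
Proof.
move=> h; apply/cvgrPdist_le => e e0. near=> k. apply: le_trans (h k) _. apply: ltW.
near: k. exact: (near_infty_natSinv_lt (PosNum e0)).
Unshelve. all: by end_near. Qed.

Lemma eadd_shift (R : realType) (a b : \bar R) (c d : R) :
  (a + c%:E <= b + d%:E)%E -> (a + (c - d)%:E <= b)%E.
Proof.
case: a => [a||]; case: b => [b||] //=.
- by rewrite -!(@EFinD R) !lee_fin; lra.
- by move=> _; rewrite leey.
- by move=> _; rewrite addNye leNye.
Qed.

Lemma eadd_mono (R : realType) (a c : \bar R) (b b' : R) :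
  (a + b%:E <= c)%E -> b' <= b -> (a + b'%:E <= c)%E.
Proof. by move=> h hb; apply: le_trans h; apply: leeD => //; rewrite lee_fin. Qed.

Lemma ball_bounded (R : realType) n (xb : 'rV[R]_n) r :
  bounded_set [set y | `|xb - y| <= r].
Proof.
exists (`|xb| + r); split; first by apply: realD; [exact: normr_real | exact: num_real].
move=> M hM y /= hy.
have : `|y| <= `|xb| + `|xb - y|.
  by have := ler_normB xb (xb - y); rewrite opprB addrC subrK.
lra.
Qed.

Lemma get_large (R : realType) (m : nat -> R) X : m @ \oo --> +oo -> exists i, X <= m i.
Proof.
move=> /cvgryPge/(_ X) [N _ HN]; exists N; apply: HN => /=; exact: leqnn.
Qed.



Lemma step (R : realType) (n : nat) (f : 'rV[R]_n -> \bar R)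
  (M : set 'rV[R]_n) (xb vb : 'rV[R]_n) (m : nat -> R) :
  lower_semicontinuous f -> frechet_subdiff f xb vb -> m @ \oo --> +oo ->
  (forall i, bd (\bigcup_(x in M) limiting_subdiff (prox_shift f (m i) xb) x) vb) ->
  forall t : R, 0 < t -> exists x v, ~ M x /\ frechet_subdiff f x v /\
    `|xb - x| <= t /\ `|fine (f xb) - fine (f x)| <= t /\ `|vb - v| <= t.
Proof.
move=> lf [fxbfin Hvb] hm hbd t t0.
pose K : R := n%:R. have K0 : 0 <= K by rewrite ler0n.
pose eps0 := t / (4 * (K + 1)).
have K10 : 0 < 4 * (K + 1) by rewrite mulr_gt0 // ltr_wpDl.
have e00 : 0 < eps0 by rewrite divr_gt0.
have heps : eps0 * (4 * (K + 1)) = t by rewrite divfK // gt_eqF.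
have [delta0 d00 Hd] := Hvb eps0 e00.
pose r := delta0 / (K + 2).
have K20 : 0 < K + 2 by rewrite ltr_wpDl.
have r0 : 0 < r by rewrite divr_gt0.
have hr : r * (K + 2) = delta0 by rewrite divfK // gt_eqF.
pose P := 2 * (K * eps0 + eps0).
have P0 : 0 < P by rewrite mulr_gt0 // ltr_wpDl // mulr_ge0 // ltW.
pose Q := K * (`|vb| + eps0) + eps0.
have Q0 : 0 <= Q by apply: addr_ge0; [apply: mulr_ge0 => //; apply: addr_ge0 => //; exact: ltW | exact: ltW].
have := @get_large R m (2 * P / r + P / t + Q * P / t + 1). move=> /(_ hm) [i hi].
pose mi := m i.
have t1 : 0 <= 2 * P / r by rewrite divr_ge0 // ltW // mulr_gt0.
have t2 : 0 <= P / t by rewrite divr_ge0 // ltW.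
have t3 : 0 <= Q * P / t by apply: divr_ge0; [exact: mulr_ge0 Q0 (ltW P0) | exact: ltW].
have mi0 : 0 < mi by rewrite /mi; lra.
have mr : 2 * P < mi * r by rewrite -ltr_pdivrMr //; rewrite /mi; lra.
have mt : P <= mi * t by rewrite -ler_pdivrMr //; rewrite /mi; lra.
have mqt : Q * P <= mi * t by rewrite -ler_pdivrMr //; rewrite /mi; lra.
pose A := \bigcup_(x in M) limiting_subdiff (prox_shift f mi xb) x.
have [w [hw nAw]] : exists w, `|vb - w| < eps0 /\ ~ A w.
  have [_ nint] := hbd i; apply: contrapT => H; apply: nint.
  rewrite /interior /=; apply/nbhs_ballP; exists eps0 => // y.
  rewrite -ball_normE /= => hy; apply: contrapT => ny; apply: H; by exists y.
pose h := fun y : 'rV[R]_n => 2^-1 * mi * enorm (y - xb) ^+ 2 - dotv w (y - xb).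
have hcont : continuous h.
  have -> : h = (fun y => 2^-1 * mi * dotv (y - xb) (y - xb) - dotv w (y - xb)).
    by apply: funext => y; rewrite /h enorm_sqr.
  exact: h_cont.
pose g := fun y => (f y + (h y)%:E)%E.
have lg : lower_semicontinuous g := @lsc_add R n f h lf hcont.
pose B := [set y | `|xb - y| <= r].
have cB : compact B.
  apply: bounded_closed_compact; first exact: ball_bounded.
  have := @closed_ball_closed _ _ xb r; rewrite closed_ballE //.
have Bxb : B xb by rewrite /B /= subrr normr0 ltW.
have hB : forall y, B y -> enorm (y - xb) < delta0.
  move=> y By; apply: le_lt_trans (enorm_le_norm _) _.
  rewrite distrC; have : `|xb - y| <= r := By.
  have := normr_ge0 (xb - y); nra.
have [Fb hFb] : exists Fb, f xb = Fb%:E.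
  by move: fxbfin; case: (f xb) => // Fb _; exists Fb.
have low : forall y, B y ->
  (Fb%:E + (dotv vb (y - xb))%:E - (eps0 * enorm (y - xb))%:E <= f y)%E.
  by move=> y By; rewrite -hFb; apply: Hd; apply: hB.
have gfin : forall y, B y -> (-oo < g y)%E.
  move=> y By; have := low y By; rewrite /g; case: (f y) => [r'||] hl.
  - by rewrite ltNyr.
  - by rewrite addye.
  - by move: hl; rewrite -!EFinD leeNy_eq.
have [xs Bxs hmin] := @lsc_min R n g B xb cB Bxb lg gfin.
have dot0 : forall a : 'rV[R]_n, dotv a 0 = 0.
  by move=> a; rewrite /dotv big1 // => j _; rewrite mxE mulr0.
have hxb : h xb = 0 by rewrite /h subrr enorm_sqr !dot0; lra.
pose d := xs - xb.
pose e := enorm d.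
have e0 : 0 <= e := enorm_ge0 d.
have Nde : `|d| <= e := norm_le_enorm d.
have hlow := low xs Bxs.
have hup := hmin xb Bxb.
have [F hF] : exists F, f xs = F%:E.
  move: hlow hup; rewrite /g hxb hFb; case: (f xs) => [F||] hl hu.
  - by exists F.
  - by move: hu; rewrite addye.
  - by move: hl; rewrite -!EFinD leeNy_eq.
move: hlow hup; rewrite /g hxb hFb hF -!EFinD !lee_fin -/d -/e => lowR upR.
have hxs : h xs = 2^-1 * mi * e ^+ 2 - dotv w d by [].
rewrite hxs in upR.
have hw' : `|w - vb| < eps0 by rewrite distrC.
have b1 : `|dotv (w - vb) d| <= K * eps0 * e.
  apply: le_trans (dotv_le _ _) _; rewrite -/K.
  have hab : `|w - vb| * `|d| <= eps0 * e by apply: ler_pM => //; exact: ltW.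
  by move: (ler_wpM2l K0 hab); rewrite !mulrA.
have dB : dotv (w - vb) d = dotv w d - dotv vb d := dotvBl _ _ _.
have mee : mi * e ^+ 2 <= P * e.
  have := ler_norm (dotv (w - vb) d); rewrite dB /P => hn.
  rewrite dB in b1; lra.
have me : mi * e <= P.
  have [e_0|e_n0] := eqVneq e 0; first by rewrite e_0 mulr0 ltW.
  have e_pos : 0 < e by rewrite lt_def e_n0 e0.
  by rewrite -(ler_pM2r e_pos) -mulrA -expr2.
have her : e < r / 2 by rewrite ltr_pdivlMr //; nra.
have het : e <= t by nra.
have hQe : Q * e <= t.
  have h1 := ler_wpM2l Q0 me.
  have h2 : mi * (Q * e) = Q * (mi * e) by rewrite mulrCA.
  have : mi * (Q * e) <= mi * t by rewrite h2; exact: le_trans h1 mqt.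
  by rewrite ler_pM2l.
have locmin : forall y, `|xs - y| < r / 2 -> (g xs <= g y)%E.
  move=> y hy; apply: hmin; rewrite /B /=.
  apply: le_trans (ler_distD xs _ _) _.
  have : `|xb - xs| <= e by rewrite distrC.
  lra.
have gprox : forall y, g y = (prox_shift f mi xb y + (- dotv w (y - xb))%:E)%E.
  by move=> y; rewrite /g /prox_shift /h -addeA -EFinD.
have nMxs : ~ M xs.
  move=> Mxs; apply: nAw; exists xs => //; split.
    by rewrite /prox_shift hF.
  exists (fun=> xs), (fun=> w); split; last first.
    by split; [exact: cvg_cst | split; exact: cvg_cst].
  move=> _; split; first by rewrite /prox_shift hF.
  move=> eps eps_pos; exists (r / 2); first by rewrite divr_gt0.
  move=> y hy.
  have hxy : `|xs - y| < r / 2.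
    by rewrite distrC; exact: le_lt_trans (norm_le_enorm _) hy.
  have := locmin y hxy; rewrite !gprox => /eadd_shift e2.
  rewrite -addeA -EFinB; apply: eadd_mono e2 _.
  have yxb : y - xb = (y - xs) + d by rewrite /d addrA addrNK.
  rewrite yxb (dotvDr w (y - xs) d).
  have := mulr_ge0 (ltW eps_pos) (enorm_ge0 (y - xs)); lra.
have fv : frechet_subdiff f xs (w - mi *: d).
  split; first by rewrite hF.
  move=> eps eps_pos; exists (Num.min (r / 2) (eps / mi)).
    by rewrite lt_min !divr_gt0.
  move=> y; rewrite lt_min => /andP [hy1 hy2].
  have hxy : `|xs - y| < r / 2.
    by rewrite distrC; exact: le_lt_trans (norm_le_enorm _) hy1.
  have := locmin y hxy; rewrite /g => /eadd_shift e2.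
  rewrite -addeA -EFinB; apply: eadd_mono e2 _.
  rewrite ltr_pdivlMr // in hy2.
  have yxb : y - xb = (y - xs) + d by rewrite /d addrA addrNK.
  have [z zdef] : exists z, z = y - xs by exists (y - xs).
  rewrite -zdef in hy2 yxb *.
  rewrite /h yxb -/d.
  clearbody d.
  rewrite !enorm_sqr dotvBl dotvZl (dotvDl z d) !dotvDr (dotvC z d).
  have hzz := enorm_sqr z. have ez0 := enorm_ge0 z.
  nra.
have hwn : `|w| <= `|vb| + eps0.
  have : `|w| <= `|vb| + `|w - vb|.
    by have := ler_normD vb (w - vb); rewrite addrC subrK.
  lra.
have bw : `|dotv w d| <= K * (`|vb| + eps0) * e.
  apply: le_trans (dotv_le _ _) _; rewrite -/K.
  have hab : `|w| * `|d| <= (`|vb| + eps0) * e by apply: ler_pM.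
  by move: (ler_wpM2l K0 hab); rewrite !mulrA.
have bvb : `|dotv vb d| <= K * `|vb| * e.
  apply: le_trans (dotv_le _ _) _; rewrite -/K.
  have hab : `|vb| * `|d| <= `|vb| * e by apply: ler_wpM2l.
  by move: (ler_wpM2l K0 hab); rewrite !mulrA.
exists xs, (w - mi *: d); split => //; split => //; split.
  by rewrite distrC; lra.
split.
  rewrite hF /= ler_norml.
  have hb2 : - dotv vb d <= K * `|vb| * e.
    by apply: le_trans bvb; rewrite -normrN ler_norm.
  have := ler_norm (dotv w d).
  have := mulr_ge0 (mulr_ge0 K0 (ltW e00)) e0.
  have := mulr_ge0 (ltW mi0) (sqr_ge0 e).
  rewrite /Q in hQe; move=> *; apply/andP; split; nra.
rewrite opprB addrCA addrC.
apply: le_trans (ler_normD _ _) _.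
rewrite normrZ (ger0_norm (ltW mi0)).
have : mi * `|d| <= mi * e by apply: ler_wpM2l => //; exact: ltW.
have := mulr_ge0 K0 (ltW e00). rewrite /P in me; lra.
Qed.



Theorem lemma3p2 (R : realType) (n : nat) (f : 'rV[R]_n -> \bar R)
  (M : set 'rV[R]_n) (xb vb : 'rV[R]_n) (m : nat -> R) :
  lower_semicontinuous f ->
  closed M ->
  (forall x, M x -> f x \is a fin_num) ->
  M xb ->
  frechet_subdiff f xb vb ->
  m @ \oo --> +oo ->
  (forall i, bd (\bigcup_(x in M) limiting_subdiff (prox_shift f (m i) xb) x) vb) ->
  exists (x : nat -> 'rV[R]_n) (v : nat -> 'rV[R]_n),
    (forall i, ~ M (x i)) /\
    (forall i, frechet_subdiff f (x i) (v i)) /\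
    x @ \oo --> xb /\
    (fun i => fine (f (x i))) @ \oo --> fine (f xb) /\
    v @ \oo --> vb.
Proof.
move=> lf _ _ _ fvb hm hbd.
have hs := @step R n f M xb vb m lf fvb hm hbd.
have : forall k : nat, exists p : 'rV[R]_n * 'rV[R]_n, ~ M p.1 /\
    frechet_subdiff f p.1 p.2 /\ `|xb - p.1| <= k.+1%:R^-1 /\
    `|fine (f xb) - fine (f p.1)| <= k.+1%:R^-1 /\ `|vb - p.2| <= k.+1%:R^-1.
  move=> k; have kp : 0 < k.+1%:R^-1 :> R by rewrite invr_gt0 ltr0Sn.
  have [x [v H]] := hs _ kp.
  by exists (x, v).
move=> /choice [p Hp].
exists (fun k => (p k).1), (fun k => (p k).2).
split; first by move=> k; case: (Hp k).
split; first by move=> k; case: (Hp k) => _ [].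
split; first by apply: cvg_inv => k; case: (Hp k) => _ [_ []].
split; first by apply: cvg_inv => k; case: (Hp k) => _ [_ [_ []]].
by apply: cvg_inv => k; case: (Hp k) => _ [_ [_ [_]]].
Qed.
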